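(* Let $\mathscr{a}\in\mathbb{R}$, $\mathscr{b}\in(\mathscr{a},\infty)$, $\rho\in(0,\infty)$, $f\in C([\mathscr{a},\mathscr{b}],\mathbb{R})$, for $\theta=(\theta_1,\theta_2,\theta_3,\theta_4)\in\mathbb{R}^4$ and $x\in\mathbb{R}$ let $\mathscr{N}^\theta(x)=\theta_3\max\{\theta_1x+\theta_2,0\}+\theta_4$ and $\mathcal{L}(\theta)=\rho\int_{\mathscr{a}}^{\mathscr{b}}(\mathscr{N}^\theta(y)-f(y))^2\,\mathrm{d}y$, let $m=\rho\int_{\mathscr{a}}^{\mathscr{b}}\big(f(x)-(\mathscr{b}-\mathscr{a})^{-1}\int_{\mathscr{a}}^{\mathscr{b}}f(y)\,\mathrm{d}y\big)^2\,\mathrm{d}x$, and let $\theta\in\mathbb{R}^4$ satisfy $\mathcal{L}(\theta)<m$. Then $\max\{\theta_1\mathscr{a}+\theta_2,\ \theta_1\mathscr{b}+\theta_2\}>0$. *)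

(* Defs.v *)
From Stdlib Require Import Reals Lra.
From Coquelicot Require Import Coquelicot.
Open Scope R_scope.

Definition realization (th1 th2 th3 th4 x : R) : R :=
  th3 * Rmax (th1 * x + th2) 0 + th4.

Definition loss (a b rho : R) (f : R -> R) (th1 th2 th3 th4 : R) : R :=
  rho * RInt (fun y => (realization th1 th2 th3 th4 y - f y) ^ 2) a b.

Definition mval (a b rho : R) (f : R -> R) : R :=
  rho * RInt (fun x => (f x - / (b - a) * RInt f a b) ^ 2) a b.

Definition continuous_on_interval (a b : R) (f : R -> R) : Prop :=
  forall x, a <= x <= b ->
    filterlim f (within (fun y => a <= y <= b) (locally x)) (locally (f x)).

(* Main.v *)
Require Import Defs.
From Stdlib Require Import Reals Lra.
From Coquelicot Require Import Coquelicot.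
Open Scope R_scope.

Definition clamp (a b x : R) : R := Rmax a (Rmin b x).

Lemma clamp_in a b x : a <= b -> a <= clamp a b x <= b.
Proof. intros; unfold clamp, Rmax, Rmin; repeat destruct Rle_dec; lra. Qed.

Lemma clamp_id a b x : a <= x <= b -> clamp a b x = x.
Proof. intros; unfold clamp, Rmax, Rmin; repeat destruct Rle_dec; lra. Qed.

Lemma clamp_lim a b x : a <= b ->
  filterlim (clamp a b) (locally x)
    (within (fun y => a <= y <= b) (locally (clamp a b x))).
Proof.
  intros hab P [eps HP].
  unfold filtermap; exists eps; intros y Hy.
  apply HP; [|apply clamp_in; exact hab].
  change (Rabs (y - x) < eps) in Hy.
  change (Rabs (clamp a b y - clamp a b x) < eps).
  apply Rabs_def2 in Hy. apply Rabs_def1;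
  unfold clamp, Rmax, Rmin; repeat destruct Rle_dec; lra.
Qed.

Lemma g_cont a b f x : a <= b -> continuous_on_interval a b f ->
  continuous (fun y => f (clamp a b y)) x.
Proof.
  intros hab hf.
  unfold continuous.
  eapply filterlim_comp.
  - apply clamp_lim; exact hab.
  - apply hf. apply clamp_in; exact hab.
Qed.

Lemma cont_minus_k (h : R -> R) k : (forall x, continuous h x) ->
  forall x, continuity_pt (fun y => h y - k) x.
Proof.
  intros H x.
  change (continuity_pt (minus_fct h (fct_cte k)) x).
  apply continuity_pt_minus.
  - apply continuity_pt_filterlim; apply H.
  - apply continuity_pt_const; intros u v; reflexivity.
Qed.

Lemma ex_minus_k (h : R -> R) k a b : (forall x, continuous h x) ->
  ex_RInt (fun y => h y - k) a b.
Proof.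
  intros H. apply (@ex_RInt_continuous R_CompleteNormedModule); intros z _.
  apply continuity_pt_filterlim; apply cont_minus_k; exact H.
Qed.

Lemma ex_sq_k (h : R -> R) k a b : (forall x, continuous h x) ->
  ex_RInt (fun y => (h y - k) ^ 2) a b.
Proof.
  intros H. apply (@ex_RInt_continuous R_CompleteNormedModule); intros z _.
  apply continuity_pt_filterlim.
  change (continuity_pt (mult_fct (fun y => h y - k) (mult_fct (fun y => h y - k) (fct_cte 1))) z).
  apply continuity_pt_mult; [|apply continuity_pt_mult];
    try (apply cont_minus_k; exact H).
  apply continuity_pt_const; intros u v; reflexivity.
Qed.

Lemma ex_h (h : R -> R) a b : (forall x, continuous h x) -> ex_RInt h a b.
Proof.
  intros H. apply (@ex_RInt_continuous R_CompleteNormedModule); intros z _. apply H.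
Qed.

Theorem lemma5p7 (a b rho : R) (f : R -> R) (th1 th2 th3 th4 : R)
  (hab : a < b) (hrho : 0 < rho) (hf : continuous_on_interval a b f)
  (hL : loss a b rho f th1 th2 th3 th4 < mval a b rho f) :
  Rmax (th1 * a + th2) (th1 * b + th2) > 0.
Proof.
  destruct (Rle_lt_dec (Rmax (th1 * a + th2) (th1 * b + th2)) 0) as [Hle|Hgt];
    [exfalso|exact Hgt].
  pose proof (Rmax_l (th1 * a + th2) (th1 * b + th2)) as Ha.
  pose proof (Rmax_r (th1 * a + th2) (th1 * b + th2)) as Hb.
  pose (g := fun y => f (clamp a b y)).
  assert (Hmin : Rmin a b = a) by (apply Rmin_left; lra).
  assert (Hmax : Rmax a b = b) by (apply Rmax_right; lra).
  assert (gc : forall x, continuous g x) by (intro; apply g_cont; [lra|exact hf]).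
  assert (Hgf : forall x, a < x < b -> g x = f x)
    by (intros; unfold g; rewrite clamp_id; [reflexivity|lra]).
  pose (c := th4).
  pose (mu := / (b - a) * RInt g a b).
  assert (E1 : RInt (fun y => (realization th1 th2 th3 th4 y - f y) ^ 2) a b
             = RInt (fun y => (c - g y) ^ 2) a b).
  { apply RInt_ext; rewrite Hmin, Hmax; intros x Hx.
    rewrite Hgf by lra. unfold realization, c.
    assert (Hz : th1 * x + th2 <= 0) by (destruct (Rle_lt_dec 0 th1); nra).
    rewrite (Rmax_right _ _ Hz). change ((th3 * 0 + th4 - f x) ^ 2 = (th4 - f x) ^ 2 :> R). ring. }
  assert (E2 : RInt (fun x => (f x - / (b - a) * RInt f a b) ^ 2) a b
             = RInt (fun x => (g x - mu) ^ 2) a b).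
  { assert (RInt f a b = RInt g a b) as ->.
    { apply RInt_ext; rewrite Hmin, Hmax; intros; symmetry; apply Hgf; lra. }
    apply RInt_ext; rewrite Hmin, Hmax; intros x Hx.
    rewrite Hgf by lra. reflexivity. }
  unfold loss, mval in hL. rewrite E1, E2 in hL.
  assert (ex1 : ex_RInt (fun x => (g x - mu) ^ 2) a b) by (apply ex_sq_k; exact gc).
  assert (ex2 : ex_RInt (fun x => g x - mu) a b) by (apply ex_minus_k; exact gc).
  assert (exg : ex_RInt g a b) by (apply ex_h; exact gc).
  assert (I2 : RInt (fun x => g x - mu) a b = 0).
  { rewrite (RInt_minus g (fun _ => mu)); [|exact exg|apply ex_RInt_const].
    rewrite RInt_const. change (RInt g a b - (b - a) * mu = 0).
    unfold mu. field. lra. }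
  assert (E3 : RInt (fun y => (c - g y) ^ 2) a b
     = RInt (fun x => (g x - mu) ^ 2) a b + (2 * (mu - c)) * RInt (fun x => g x - mu) a b
       + (b - a) * (mu - c) ^ 2).
  { rewrite (RInt_ext (fun y => (c - g y) ^ 2)
      (fun y => plus (plus ((g y - mu) ^ 2) (scal (2 * (mu - c)) (g y - mu))) ((mu - c) ^ 2))).
    2:{ intros x _. change ((c - g x) ^ 2 = (g x - mu) ^ 2 + (2 * (mu - c)) * (g x - mu) + (mu - c) ^ 2).
        ring. }
    rewrite (RInt_plus (fun y => plus ((g y - mu) ^ 2) (scal (2 * (mu - c)) (g y - mu))) (fun _ => (mu - c) ^ 2)).
    2:{ exact (ex_RInt_plus (V:=R_NormedModule) _ _ a b ex1 (ex_RInt_scal _ a b (2 * (mu - c)) ex2)). }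
    2:{ exact (ex_RInt_const (V:=R_NormedModule) a b ((mu - c) ^ 2)). }
    rewrite (RInt_plus (fun y => (g y - mu) ^ 2) (fun y => scal (2 * (mu - c)) (g y - mu))); [|exact ex1|exact (ex_RInt_scal (V:=R_NormedModule) _ a b (2 * (mu - c)) ex2)].
    rewrite (RInt_scal (fun y => g y - mu)) by exact ex2.
    rewrite (RInt_const a b ((mu - c) ^ 2)). reflexivity. }
  rewrite E3, I2 in hL.
  assert (0 <= (b - a) * (mu - c) ^ 2) by (apply Rmult_le_pos; [lra|apply pow2_ge_0]).
  nra.
Qed.
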